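(* Let $n \geq 1$, $i \in \mathbb{Z}_{\geq 1}$ and $B \subseteq [n]$. Then $\mathrm{Cons}(V_B, i) = \mathrm{Gov}(V_B, i)$.
   Context: $V_{[n]} = \mathbb{F}_2^n$ with basis $e_1,\dots,e_n$ and dual basis $\chi_1,\dots,\chi_n$. For $C \subseteq [n]$ and $i \geq 1$, $\widetilde{\mathrm{Multi}}(V_C, i)$ is the span (inside the space of multilinear maps $V_{[n]}^i \to \mathbb{F}_2$) of $\chi_{\tau(1)}\otimes\cdots\otimes\chi_{\tau(i)}$ over injective maps $\tau: \{1,\dots,i\} \to C$, where $(\chi_{h_1}\otimes\cdots\otimes\chi_{h_i})(\sigma_1,\dots,\sigma_i) = \prod_s\chi_{h_s}(\sigma_s)$. For $b \in \widetilde{\mathrm{Multi}}(V_C,i)$ and $j \in C$, $b(e_j, -)$ lies in $\widetilde{\mathrm{Multi}}(V_{C\setminus\{j\}}, i-1)$. Consistent tensors $\mathrm{Cons}(V_C, i) \subseteq \widetilde{\mathrm{Multi}}(V_C,i)$ are defined recursively: $\mathrm{Cons}(V_C,1)$ is the span of $\{\chi_x : x \in C\}$; $\mathrm{Cons}(V_C,2)$ consists of the $b$ with $b(\sigma_1,\sigma_2) = b(\sigma_2,\sigma_1)$ for all $\sigma_1,\sigma_2$; $\mathrm{Cons}(V_C,3)$ consists of the $b$ such that $b(e_j,-) \in \mathrm{Cons}(V_{C\setminus\{j\}},2)$ for all $j \in C$ and $b(\sigma_1,\sigma_2,\sigma_3)+b(\sigma_3,\sigma_1,\sigma_2)+b(\sigma_2,\sigma_3,\sigma_1)=0$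 for all $\sigma_1,\sigma_2,\sigma_3 \in \{e_1,\dots,e_n\}$; for $i \geq 4$, $\mathrm{Cons}(V_C,i)$ consists of the $b$ such that $b(e_j,-) \in \mathrm{Cons}(V_{C\setminus\{j\}}, i-1)$ for all $j \in C$ and $b(e_{j_1}, e_{j_2}, -) = b(e_{j_2}, e_{j_1}, -)$ for all distinct $j_1, j_2 \in C$. Governing tensors: for $A \subseteq [n]$ with $\#A = i \geq 2$ and $x \in A$, $\phi_{(A,x)} = \sum_\tau \chi_{\tau(1)}\otimes\cdots\otimes\chi_{\tau(i)}$ over bijections $\tau:\{1,\dots,i\}\to A$ with $\tau(i-1)=x$ or $\tau(i)=x$; for $A=\{x\}$, $\phi_{(A,x)} = \chi_x$. $\mathrm{Gov}(V_C, i)$ is the span of $\phi_{(A,x)}$ over $A \subseteq C$ with $\#A = i$ and $x \in A$. *)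

(* Defs.v *)
From HB Require Import structures.
From mathcomp Require Import all_boot all_order all_algebra.
Set Implicit Arguments. Unset Strict Implicit. Unset Printing Implicit Defensive.
Import GRing.Theory.
Local Open Scope ring_scope.

Section Tensors.
Variable n : nat.

Definition V := 'rV['F_2]_n.
(* standard basis e_j and dual basis chi_j (indices 0-based: 'I_n) *)
Definition e (j : 'I_n) : V := delta_mx 0 j.
Definition chi (j : 'I_n) (v : V) : 'F_2 := v 0 j.

(* Maps V^i -> F_2 (arguments as i-tuples of vectors); a finite-dimensional
   F_2-vector space.  All spaces below are spans inside it of multilinear maps. *)
Definition tensor (i : nat) := {ffun i.-tuple V -> ('F_2)^o}.

Definition elem (i : nat) (h : i.-tuple 'I_n) : tensor i :=
  [ffun s : i.-tuple V => \prod_(k < i) chi (tnth h k) (tnth s k)].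

(* injective maps tau : {1..i} -> C  <->  duplicate-free i-tuples with entries in C *)
Definition injTo (i : nat) (C : {set 'I_n}) : seq (i.-tuple 'I_n) :=
  filter (fun h : i.-tuple 'I_n => uniq h && all (fun x => x \in C) h)
    (enum {: i.-tuple 'I_n}).

Definition Multi (C : {set 'I_n}) (i : nat) : {vspace tensor i} :=
  <<[seq elem h | h <- injTo i C]>>%VS.

Definition contr (i : nat) (b : tensor i.+1) (v : V) : tensor i :=
  [ffun t : i.-tuple V => b [tuple of v :: t]].

Definition Cons1 (C : {set 'I_n}) (b : tensor 1) : Prop :=
  b \in <<[seq elem [tuple x] | x <- enum C]>>%VS.

Definition Cons2 (C : {set 'I_n}) (b : tensor 2) : Prop :=
  b \in Multi C 2 /\
  forall s1 s2 : V, b [tuple s1; s2] = b [tuple s2; s1].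

Definition Cons3 (C : {set 'I_n}) (b : tensor 3) : Prop :=
  [/\ b \in Multi C 3,
      (forall j, j \in C -> Cons2 (C :\ j) (contr b (e j))) &
      forall j1 j2 j3 : 'I_n,
        b [tuple e j1; e j2; e j3] + b [tuple e j3; e j1; e j2]
          + b [tuple e j2; e j3; e j1] = 0].

Fixpoint Cons4 (k : nat) (C : {set 'I_n}) (b : tensor k.+4) : Prop :=
  let prev := match k return {set 'I_n} -> tensor k.+3 -> Prop with
              | 0 => Cons3
              | k'.+1 => @Cons4 k'
              end in
  [/\ b \in Multi C k.+4,
      (forall j, j \in C -> prev (C :\ j) (contr b (e j))) &
      forall j1 j2 : 'I_n, j1 \in C -> j2 \in C -> j1 != j2 ->
        contr (contr b (e j1)) (e j2) = contr (contr b (e j2)) (e j1)].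

(* Cons(V_C, i), i >= 1 (for i = 0 it is not defined in the paper; we put False) *)
Definition Consistent (C : {set 'I_n}) (i : nat) : tensor i -> Prop :=
  match i return tensor i -> Prop with
  | 0 => fun _ => False
  | 1 => Cons1 C
  | 2 => Cons2 C
  | 3 => Cons3 C
  | k.+4 => @Cons4 k C
  end.

(* governing tensor phi_(A,x) in degree i = #A: sum over bijections
   tau : {1..i} -> A (duplicate-free i-tuples whose entry set is A) with
   x among the last two entries tau(i-1), tau(i).  For i = 1, drop 0 h = h,
   so the condition is tau(1) = x and phi_({x},x) = chi_x. *)
Definition phi (i : nat) (A : {set 'I_n}) (x : 'I_n) : tensor i :=
  \sum_(h : i.-tuple 'I_n | uniq h && ([set y in h] == A) && (x \in drop i.-2 h))
     elem h.

Definition Gov (C : {set 'I_n}) (i : nat) : {vspace tensor i} :=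
  <<[seq phi i A x | A <- [seq A : {set 'I_n} <- enum (powerset C) | #|A| == i], x <- enum A]>>%VS.

End Tensors.

(* Main.v *)
Require Import Defs.
From HB Require Import structures.
From mathcomp Require Import all_boot all_order all_algebra.
From mathcomp Require Import zify ring.
Set Implicit Arguments. Unset Strict Implicit. Unset Printing Implicit Defensive.
Import GRing.Theory.
Local Open Scope ring_scope.
Section S.
Variable n : nat.
Implicit Types (C A : {set 'I_n}).
Definition cf (i : nat) (b : tensor n i) (t : i.-tuple 'I_n) : 'F_2 := b (map_tuple (@e n) t).

Lemma cf_elem i (h t : i.-tuple 'I_n) : cf (elem h) t = (h == t)%:R.
Proof.
rewrite /cf /elem ffunE.
have [<-|ne] := eqVneq h t.
  by apply: big1 => k _; rewrite tnth_map /chi /e mxE !eqxx.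
have [k hk] : exists k, tnth h k != tnth t k.
  apply/existsP; apply: contraR ne => /existsPn H; apply/eqP/eq_from_tnth => k.
  by have := H k; rewrite negbK => /eqP.
rewrite (bigD1 k) //= tnth_map /chi /e mxE eqxx /=.
rewrite (negbTE hk) mul0r //.
Qed.

Lemma cfD i (b1 b2 : tensor n i) t : cf (b1 + b2) t = cf b1 t + cf b2 t.
Proof. by rewrite /cf ffunE. Qed.
Lemma cfZ i a (b : tensor n i) t : cf (a *: b) t = a * cf b t.
Proof. by rewrite /cf ffunE. Qed.
Lemma cf0 i t : cf (0 : tensor n i) t = 0.
Proof. by rewrite /cf ffunE. Qed.
Lemma cf_sum i I (r : seq I) (P : pred I) (F : I -> tensor n i) t :
  cf (\sum_(k <- r | P k) F k) t = \sum_(k <- r | P k) cf (F k) t.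
Proof. exact: (big_morph (fun b => cf b t) (fun x y => cfD x y t) (cf0 t)). Qed.

Lemma span_ind i (s : seq (tensor n i)) (P : tensor n i -> Prop) :
  P 0 -> (forall a b, P a -> P b -> P (a + b)) -> (forall k v, P v -> P (k *: v)) ->
  (forall v, v \in s -> P v) -> forall b, b \in <<s>>%VS -> P b.
Proof.
move=> P0 PD PZ Ps b /(@coord_span _ _ _ (in_tuple s)) ->.
apply: (big_ind P) => // k _; apply: PZ; apply: Ps; exact: mem_nth.
Qed.

Definition expand i (b : tensor n i) := \sum_t cf b t *: elem t.
Definition fixd i (b : tensor n i) := expand b = b.

Lemma fixd0 i : fixd (0 : tensor n i).
Proof. by rewrite /fixd /expand; apply: big1 => t _; rewrite cf0 scale0r. Qed.
Lemma fixdD i (a b : tensor n i) : fixd a -> fixd b -> fixd (a + b).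
Proof.
rewrite /fixd /expand => {2}<- {2}<-; rewrite -big_split /=.
by apply: eq_bigr => t _; rewrite cfD scalerDl.
Qed.
Lemma fixdZ i k (b : tensor n i) : fixd b -> fixd (k *: b).
Proof.
rewrite /fixd /expand => {2}<-; rewrite scaler_sumr.
by apply: eq_bigr => t _; rewrite cfZ scalerA.
Qed.
Lemma fixd_sum i I (r : seq I) (P : pred I) (F : I -> tensor n i) :
  (forall k, P k -> fixd (F k)) -> fixd (\sum_(k <- r | P k) F k).
Proof. move=> H; apply: (big_ind (@fixd i)) => //; [exact: fixd0| exact: fixdD]. Qed.
Lemma fixd_elem i (h : i.-tuple 'I_n) : fixd (elem h).
Proof.
rewrite /fixd /expand (bigD1 h) //= cf_elem eqxx scale1r big1 ?addr0 // => t /negbTE.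
by rewrite cf_elem eq_sym => ->; rewrite scale0r.
Qed.
Lemma eq_fixd i (a b : tensor n i) : fixd a -> fixd b -> (forall t, cf a t = cf b t) -> a = b.
Proof.
move=> fa fb H; rewrite -fa -fb /expand; apply: eq_bigr => t _; by rewrite H.
Qed.

Definition supp i C (b : tensor n i) := forall t, cf b t != 0 -> uniq t && all (fun x => x \in C) t.

Lemma Multi_char i C (b : tensor n i) : b \in Multi C i <-> fixd b /\ supp C b.
Proof.
split.
  apply: (span_ind (P := fun b => fixd b /\ supp C b)).
  - by split; [exact: fixd0| move=> t; rewrite cf0 eqxx].
  - move=> a c [fa sa] [fc sc]; split; first exact: fixdD.
    move=> t; rewrite cfD; have [a0|/sa //] := eqVneq (cf a t) 0.
    by rewrite a0 add0r => /sc.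
  - move=> k v [fv sv]; split; first exact: fixdZ.
    by move=> t; rewrite cfZ mulf_eq0 negb_or => /andP[_ /sv].
  - move=> v /mapP[h hin ->]; move: hin; rewrite mem_filter => /andP[hC _]; split; first exact: fixd_elem.
    by move=> t; rewrite cf_elem; have [<- //|] := eqVneq h t; rewrite eqxx.
move=> [fb sb]; rewrite -fb /expand (bigID (fun t : i.-tuple 'I_n => uniq t && all (fun x => x \in C) t)) /=.
rewrite [X in _ + X]big1 ?addr0; last first.
  by move=> t /negbTE ht; apply/eqP; rewrite scaler_eq0; apply/orP; left; have := sb t; rewrite ht; case: (cf b t == 0) => //; by move=> /(_ isT).
apply: memv_suml => t ht; apply: memvZ; apply: memv_span; apply: map_f.
by rewrite mem_filter ht mem_enum.
Qed.

Definition ctup i (j : 'I_n) (t : i.-tuple 'I_n) : i.+1.-tuple 'I_n := [tuple of j :: t].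

Lemma cf_contr i (b : tensor n i.+1) j t : cf (contr b (e j)) t = cf b (ctup j t).
Proof. by rewrite /cf /contr ffunE; congr (b _); apply: val_inj. Qed.

Lemma contrD i (a b : tensor n i.+1) v : contr (a + b) v = contr a v + contr b v.
Proof. by apply/ffunP => t; rewrite !ffunE. Qed.
Lemma contrZ i k (b : tensor n i.+1) v : contr (k *: b) v = k *: contr b v.
Proof. by apply/ffunP => t; rewrite !ffunE. Qed.
Lemma contr0 i v : contr (0 : tensor n i.+1) v = 0.
Proof. by apply/ffunP => t; rewrite !ffunE. Qed.
Lemma contr_sum i I (r : seq I) (P : pred I) (F : I -> tensor n i.+1) v :
  contr (\sum_(k <- r | P k) F k) v = \sum_(k <- r | P k) contr (F k) v.
Proof. exact: (big_morph (fun b => contr b v) (fun x y => contrD x y v) (contr0 i v)). Qed.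

Lemma contr_elem i x (h : i.-tuple 'I_n) v : contr (elem (ctup x h)) v = chi x v *: elem h.
Proof.
apply/ffunP => t; rewrite !ffunE big_ord_recl /=.
congr (_ * _); apply: eq_bigr => k _.
by rewrite /ctup !tnthS.
Qed.

Lemma fixd_contr i (b : tensor n i.+1) v : fixd b -> fixd (contr b v).
Proof.
move=> <-; rewrite /expand contr_sum; apply: fixd_sum => t _.
rewrite contrZ; apply: fixdZ; case/tupleP: t => x t.
have -> : [tuple of x :: t] = ctup x t by [].
rewrite contr_elem; apply: fixdZ; exact: fixd_elem.
Qed.

Definition Cut i C (b : tensor n i) :=
  exists W : {set 'I_n} -> 'I_n -> 'F_2, forall t : i.-tuple 'I_n,
    uniq t -> all (fun x => x \in C) t -> cf b t = \sum_(x <- drop i.-2 t) W [set y in t] x.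
Definition Char i C (b : tensor n i) := b \in Multi C i /\ Cut C b.

Lemma cf_phi i A x t :
  cf (phi i A x) t = (uniq t && ([set y in t] == A) && (x \in drop i.-2 t))%:R.
Proof.
rewrite /phi cf_sum (eq_bigr (fun h => (h == t)%:R)); last by move=> h _; rewrite cf_elem.
case Pt: (uniq t && ([set y in t] == A) && (x \in drop i.-2 t)).
  rewrite (bigD1 t) //= eqxx big1 ?addr0 // => h /andP[_ /negbTE -> //].
by apply: big1 => h Ph; have [eht|] := eqVneq h t; [move: Ph; rewrite eht Pt|].
Qed.

Lemma sum_eq_uniq (s : seq 'I_n) x : uniq s ->
  \sum_(y <- s) ((y == x)%:R : 'F_2) = (x \in s)%:R.
Proof.
elim: s => [|a s IH] /=; first by rewrite big_nil.
move=> /andP[nas us]; rewrite big_cons IH // in_cons.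
have [eax|nax] := eqVneq a x.
  by rewrite -eax (negbTE nas) addr0.
by rewrite add0r.
Qed.

Lemma sum_enum_mem (A : {set 'I_n}) (s : seq 'I_n) (G : 'I_n -> 'F_2) :
  uniq s -> {subset s <= A} ->
  \sum_(x <- enum A) G x * (x \in s)%:R = \sum_(x <- s) G x.
Proof.
move=> us sA; rewrite big_enum big_uniq //.
rewrite (bigID (fun x => x \in s)) /= [X in _ + X]big1 ?addr0; last first.
  by move=> x /andP[_ /negbTE ->]; rewrite mulr0.
rewrite [RHS](bigID (fun x => x \in A)) /= [X in _ + X]big1 ?addr0; last first.
  by move=> x /andP[/sA -> ].
apply: eq_big => [x|x]; last by move=> /andP[_ ->]; rewrite mulr1.
by rewrite andbC.
Qed.

Definition LA C i := [seq A : {set 'I_n} <- enum (powerset C) | #|A| == i].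

Lemma mem_LA C i A : (A \in LA C i) = (A \subset C) && (#|A| == i).
Proof. by rewrite mem_filter mem_enum powersetE andbC. Qed.

Lemma LA_uniq C i : uniq (LA C i).
Proof. by rewrite filter_uniq // enum_uniq. Qed.

Lemma card_set_tuple i (t : i.-tuple 'I_n) : uniq t -> #|[set y in t]| = i.
Proof. by move=> ut; rewrite cardsE; move/card_uniqP: ut ->; rewrite size_tuple. Qed.

Lemma sub_set_tuple i C (t : i.-tuple 'I_n) :
  ([set y in t] \subset C) = all (fun x => x \in C) t.
Proof.
apply/subsetP/allP => H x xt; apply: H => //; by rewrite inE in xt *.
Qed.

Lemma Gov_char i C (b : tensor n i) : b \in Gov C i <-> Char C b.
Proof.
split.
  apply: (span_ind (P := fun b => Char C b)).
  - split; first exact: mem0v.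
    by exists (fun _ _ => 0) => t _ _; rewrite cf0 big1.
  - move=> a c [ma [Wa Ha]] [mc [Wc Hc]]; split; first exact: memvD.
    exists (fun A x => Wa A x + Wc A x) => t ut ct.
    by rewrite cfD Ha // Hc // big_split.
  - move=> k v [mv [Wv Hv]]; split; first exact: memvZ.
    exists (fun A x => k * Wv A x) => t ut ct.
    by rewrite cfZ Hv // mulr_sumr.
  move=> v /allpairsPdep[A [x [AL xA ->]]].
  move: AL; rewrite mem_LA => /andP[AC _].
  split.
    apply/Multi_char; split.
      rewrite /phi; apply: fixd_sum => h _; exact: fixd_elem.
    move=> t; rewrite cf_phi; case: (uniq t) => //=.
    case: ([set y in t] =P A) => //= eA _; by rewrite -sub_set_tuple eA.
  exists (fun B y => ((B == A) && (y == x))%:R) => t ut ct.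
  rewrite cf_phi ut /=; case: ([set y in t] =P A) => _ /=; last by rewrite big1.
  by rewrite sum_eq_uniq // drop_uniq.
move=> [mb [W HW]].
have [fb sb] : fixd b /\ supp C b by apply/Multi_char.
have -> : b = \sum_(A <- LA C i) \sum_(x <- enum A) W A x *: phi i A x.
  apply: eq_fixd => //.
    apply: fixd_sum => A _; apply: fixd_sum => x _; apply: fixdZ.
    rewrite /phi; apply: fixd_sum => h _; exact: fixd_elem.
  move=> t; rewrite cf_sum.
  under eq_bigr do rewrite cf_sum.
  under eq_bigr do under eq_bigr do rewrite cfZ cf_phi.
  case Ht: (uniq t && all (fun x => x \in C) t).
    move/andP: Ht => [ut ct].
    have AL : [set y in t] \in LA C i.
      by rewrite mem_LA sub_set_tuple ct card_set_tuple ?eqxx.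
    rewrite (bigD1_seq _ AL) ?LA_uniq //= [X in _ + X]big1 ?addr0; last first.
      move=> A /negbTE nA; apply: big1 => x _; by rewrite eq_sym nA andbF mulr0.
    rewrite HW // ut eqxx /=; apply: esym; apply: sum_enum_mem; first exact: drop_uniq.
    by move=> y /mem_drop yt; rewrite inE.
  have := sb t; rewrite Ht; case: (cf b t =P 0) => [->|]; last by move=> _ /(_ isT).
  move=> _; apply: esym; rewrite big_seq; apply: big1 => A; rewrite mem_LA => /andP[AC _].
  apply: big1 => x _; case: (uniq t) Ht => //= ct.
  case: ([set y in t] =P A) => //= eA; last by rewrite mulr0.
  by move: AC; rewrite -eA sub_set_tuple ct.
  by rewrite mulr0.
rewrite /Gov big_seq; apply: memv_suml => A AL; rewrite big_seq; apply: memv_suml => x xA.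
apply: memvZ; apply: memv_span.
by apply: (allpairs_f_dep (fun A x => phi i A x)).
Qed.

Lemma Cons1_char C (b : tensor n 1) : Cons1 C b <-> Char C b.
Proof.
suff E : Cons1 C b <-> b \in Multi C 1.
  split => [/E mb|[/E //]]; split => //.
  exists (fun _ y => cf b [tuple y]) => t _ _.
  case/tupleP: t => x t; rewrite tuple0 /= big_cons big_nil addr0; congr cf; exact: val_inj.
  rewrite /Cons1 /Multi (@eq_span _ _ _ [seq elem h | h <- injTo 1 C]) //.
  move=> v; apply/mapP/mapP => [[x xC ->]|[h hC ->]].
    exists [tuple x] => //; rewrite mem_filter /= mem_enum andbT; rewrite mem_enum in xC; by rewrite xC.
  exists (thead h).
    rewrite mem_enum; move: hC; rewrite mem_filter => /andP[/andP[_ /allP hC] _].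
    apply: hC; exact: mem_tnth.
  clear hC; case/tupleP: h => x h; rewrite theadE; congr elem; apply: val_inj; by rewrite /= tuple0.
Qed.

Lemma cf2 (b : tensor n 2) (x y : 'I_n) : cf b [tuple x; y] = b [tuple e x; e y].
Proof. by rewrite /cf; congr (b _); apply: val_inj. Qed.

Lemma elem2 (x y : 'I_n) (s1 s2 : V n) : elem [tuple x; y] [tuple s1; s2] = chi x s1 * chi y s2.
Proof. by rewrite ffunE !big_ord_recl big_ord0 mulr1. Qed.

Lemma set2C (x y : 'I_n) : [set z in [tuple x; y]] = [set z in [tuple y; x]].
Proof. by apply/setP => z; rewrite !inE orbC. Qed.

Lemma sum2 (W : 'I_n -> 'F_2) x y : \sum_(z <- drop 0 [tuple x; y]) W z = W x + W y.
Proof. by rewrite drop0 /= big_cons big_seq1. Qed.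

Definition swap2 (t : 2.-tuple 'I_n) : 2.-tuple 'I_n := [tuple tnth t 1; tnth t 0].
Lemma swap2K : involutive swap2.
Proof. by move=> t; case/tupleP: t => x t; case/tupleP: t => y t; rewrite tuple0; apply: val_inj. Qed.

Lemma Cons2_char C (b : tensor n 2) : Cons2 C b <-> Char C b.
Proof.
split => [[mb sym]|[mb [W HW]]].
  split => //.
  exists (fun A z => ((Some z == [pick y in A])%:R) * \sum_(y in A :\ z) cf b [tuple z; y]).
  case/tupleP => x t; case/tupleP: t => y t; rewrite tuple0.
  have -> : [tuple of x :: [tuple of y :: [tuple]]] = [tuple x; y] by apply: val_inj.
  rewrite sum2 /= andbT inE => xy _.
  set S := [set z in _].
  have Sx : S :\ x = [set y].
    apply/setP => z; rewrite !inE.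
    by case: (z =P y) => [->|_]; [rewrite orbT andbT eq_sym| rewrite orbF andNb].
  have Sy : S :\ y = [set x].
    apply/setP => z; rewrite !inE.
    by case: (z =P x) => [->|_]; [rewrite xy | case: (z == y)].
  rewrite Sx Sy !big_set1.
  case: pickP => [z|]; last by move/(_ x); rewrite inE mem_head.
  rewrite inE => /predU1P[->|]; rewrite !(inj_eq (@Some_inj _)).
    by rewrite (eqxx x) eq_sym (negbTE xy) mul1r mul0r addr0.
  move=> /predU1P[->|//]; rewrite (eqxx y) (negbTE xy) mul1r mul0r add0r.
  by rewrite !cf2 sym.
split => //.
have [fb sb] : fixd b /\ supp C b by apply/Multi_char.
have csym : forall x y, cf b [tuple y; x] = cf b [tuple x; y].
  move=> x y.
  case H: (uniq [tuple x; y] && all (fun z => z \in C) [tuple x; y]).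
    move/andP: H => [u a].
    have u' : uniq [tuple y; x] by move: u; rewrite /= !inE !andbT eq_sym.
    have a' : all (fun z => z \in C) [tuple y; x] by move: a; rewrite /= !andbT andbC.
    by rewrite !HW // !sum2 set2C addrC.
  have H' : (uniq [tuple y; x] && all (fun z => z \in C) [tuple y; x]) = false.
    by move: H; rewrite /= !inE !andbT eq_sym [(y \in C) && _]andbC.
  have z1 := sb [tuple x; y]; have z2 := sb [tuple y; x]; rewrite H in z1; rewrite H' in z2.
  move: z1 z2; case: (cf b [tuple x; y] =P 0) => [->|]; last by move=> _ /(_ isT).
  by case: (cf b [tuple y; x] =P 0) => [->|]; last by move=> _ _ /(_ isT).
move=> s1 s2; rewrite -fb /expand !sum_ffunE (reindex_inj (can_inj swap2K)).
apply: eq_bigr => t _; rewrite !ffunE; case/tupleP: t => x t; case/tupleP: t => y t.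
rewrite tuple0.
have -> : [tuple of x :: [tuple of y :: [tuple]]] = [tuple x; y] by apply: val_inj.
have -> : swap2 [tuple x; y] = [tuple y; x] by apply: val_inj.
rewrite csym !big_ord_recl !big_ord0 !mulr1 /=; congr (_ *: _); exact: mulrC.
Qed.

Lemma set_ctup i j (t : i.-tuple 'I_n) : [set y in ctup j t] = j |: [set y in t].
Proof. by apply/setP => z; rewrite !inE. Qed.

Lemma Multi_contr i C (b : tensor n i.+1) j :
  b \in Multi C i.+1 -> b \in Multi C i.+1 /\ contr b (e j) \in Multi (C :\ j) i.
Proof.
move=> mb; split => //; move/Multi_char: mb => [fb sb]; apply/Multi_char; split.
  exact: fixd_contr.
move=> t; rewrite cf_contr => /sb /= /andP[/andP[jt ut] /andP[jC tC]].
rewrite ut /=; apply/allP => x xt; rewrite !inE (allP tC) // andbT.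
by apply: contraNneq jt => <-.
Qed.

Lemma Char_contr m C (b : tensor n m.+3) j : j \in C -> Char C b -> Char (C :\ j) (contr b (e j)).
Proof.
move=> jC [mb [W HW]]; split; first by have [] := Multi_contr j mb.
exists (fun A x => W (j |: A) x) => t ut tC.
have jt : j \notin t by apply/negP => /(allP tC); rewrite !inE eqxx.
rewrite cf_contr HW /= ?jt ?ut //; last first.
  rewrite /= andbC; apply/andP; split.
    by apply/allP => x /(allP tC); rewrite inE => /andP[].
  exact: jC.
by rewrite set_ctup.
Qed.

Lemma supp0 i C (b : tensor n i) (t : i.-tuple 'I_n) : supp C b -> ~~ (uniq t && all (fun x => x \in C) t) -> cf b t = 0.
Proof. by move=> sb H; apply/eqP; apply: contraR H => /sb. Qed.

Lemma Char_swap m C (b : tensor n m.+4) j1 j2 :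
  Char C b -> contr (contr b (e j1)) (e j2) = contr (contr b (e j2)) (e j1).
Proof.
move=> [mb [W HW]]; have [fb sb] : fixd b /\ supp C b by apply/Multi_char.
apply: eq_fixd; try by do 2 apply: fixd_contr.
move=> t; rewrite !cf_contr.
set t1 := ctup j1 (ctup j2 t); set t2 := ctup j2 (ctup j1 t).
have pe : perm_eq t1 t2 by rewrite /t1 /t2 /= (perm_catCA [:: j1] [:: j2] t).
case H: (uniq t1 && all (fun x => x \in C) t1).
  move/andP: H => [u1 a1].
  have u2 : uniq t2 by rewrite -(perm_uniq pe).
  have a2 : all (fun x => x \in C) t2 by rewrite -(perm_all _ pe).
  by rewrite !HW // /t1 /t2 !set_ctup setUCA.
have H2 : (uniq t2 && all (fun x => x \in C) t2) = false by rewrite -(perm_uniq pe) -(perm_all _ pe).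
by rewrite !(supp0 sb) ?H ?H2.
Qed.

Lemma F2xx (x : 'F_2) : x + x = 0.
Proof. exact: (addrr_pchar2 (@pchar_Fp 2 isT)). Qed.

Lemma drop2 (T : Type) (s : seq T) k : size s = k.+2 -> exists u v, drop k s = [:: u; v].
Proof.
elim: k s => [|k IH] [|a s] //=.
  by case: s => [|u [|v [|]]] //= _; exists a, u.
by case=> /IH.
Qed.

Lemma card_D1_ge (A : {set 'I_n}) a : (#|A|.-1 <= #|A :\ a|)%N.
Proof. rewrite (cardsD1 a A); case: (a \in A) => /=; lia. Qed.

Lemma exists3 (A : {set 'I_n}) a b c : (3 < #|A|)%N -> exists2 q, q \in A & [&& q != a, q != b & q != c].
Proof.
move=> h.
have : (0 < #|A :\ a :\ b :\ c|)%N.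
  have := card_D1_ge (A :\ a :\ b) c; have := card_D1_ge (A :\ a) b; have := card_D1_ge A a.
  lia.
by case/card_gt0P => q; rewrite !inE => /and4P[qc qb qa qA]; exists q => //; rewrite qa qb qc.
Qed.

Lemma mk_rho k (A : {set 'I_n}) j1 j2 x y : #|A| = k.+4 ->
  j1 \in A -> j2 \in A -> x \in A -> y \in A ->
  j1 != j2 -> x != y -> x != j1 -> x != j2 -> y != j1 -> y != j2 ->
  exists rho : k.+2.-tuple 'I_n,
    [/\ uniq rho, [set z in rho] = A :\ j1 :\ j2 & drop k rho = [:: x; y]].
Proof.
move=> cA j1A j2A xA yA d12 dxy dx1 dx2 dy1 dy2.
set B := A :\ j1 :\ j2 :\ x :\ y.
have cB : #|B| = k.
  have := cardsD1 j1 A; have := cardsD1 j2 (A :\ j1); have := cardsD1 x (A :\ j1 :\ j2).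
  have := cardsD1 y (A :\ j1 :\ j2 :\ x).
  rewrite !inE j1A j2A xA yA !andbT [y == x]eq_sym [j2 == j1]eq_sym d12 dx1 dx2 dxy dy1 dy2 /=.
  move=> h1 h2 h3 h4; move: cA; rewrite h4 h3 h2 h1 -/B !add1n.
  by move=> [].
have sz : size (enum B ++ [:: x; y]) == k.+2 by rewrite size_cat -cardE cB addn2.
exists (Tuple sz); split => /=.
- by rewrite cat_uniq enum_uniq /= !mem_enum !inE (eqxx x) (eqxx y) /= !andbF dxy.
- apply/setP => z; rewrite inE mem_cat mem_enum !inE.
  have [->|zx] := eqVneq z x; first by rewrite orbT dx1 dx2 xA.
  have [->|zy] := eqVneq z y; first by rewrite orbT dy1 dy2 yA.
  by rewrite /= orbF.
- by rewrite drop_size_cat // -cardE.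
Qed.

Lemma setD1C (A : {set 'I_n}) a c : A :\ a :\ c = A :\ c :\ a.
Proof. by apply/setP => z; rewrite !inE andbCA. Qed.

Lemma step_fwd k C (b : tensor n k.+4) :
  b \in Multi C k.+4 ->
  (forall j, j \in C -> Char (C :\ j) (contr b (e j))) ->
  (forall j1 j2, j1 \in C -> j2 \in C -> j1 != j2 ->
     contr (contr b (e j1)) (e j2) = contr (contr b (e j2)) (e j1)) ->
  Cut C b.
Proof.
move=> mb Hc Hs.
have [fb sb] : fixd b /\ supp C b by apply/Multi_char.
have : forall j, exists W : {set 'I_n} -> 'I_n -> 'F_2, j \in C ->
    forall t : k.+3.-tuple 'I_n, uniq t -> all (fun x => x \in C :\ j) t ->
    cf b (ctup j t) = \sum_(x <- drop k.+1 t) W [set y in t] x.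
  move=> j; case jC: (j \in C); last by exists (fun _ _ => 0).
  have [_ [W HW]] := Hc j jC; exists W => _ t ut tC; rewrite -cf_contr; exact: HW.
case/fin_all_exists => Wf HWf.
have cswap : forall j1 j2 (r : k.+2.-tuple 'I_n), j1 \in C -> j2 \in C -> j1 != j2 ->
    cf b (ctup j1 (ctup j2 r)) = cf b (ctup j2 (ctup j1 r)).
  by move=> j1 j2 r j1C j2C d; rewrite -!cf_contr Hs.
pose D A j x := Wf j (A :\ j) x.
have evalD : forall A j1 j2 (r : k.+2.-tuple 'I_n) x y, A \subset C -> j1 \in A -> j2 \in A ->
    j1 != j2 -> uniq r -> [set z in r] = A :\ j1 :\ j2 -> drop k r = [:: x; y] ->
    cf b (ctup j1 (ctup j2 r)) = D A j1 x + D A j1 y.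
  move=> A j1 j2 r x y AC j1A j2A d ur sr dr.
  have j2r : j2 \notin r.
    have : j2 \notin [set z in r] by rewrite sr !inE eqxx.
    by rewrite inE.
  rewrite HWf //.
  - rewrite /= dr set_ctup sr setD1K; last by rewrite !inE eq_sym d.
    by rewrite big_cons big_seq1.
  - exact: (subsetP AC).
  - by rewrite /= j2r ur.
  rewrite /= !inE eq_sym d (subsetP AC) //=.
  apply/allP => z zr; have : z \in [set z in r] by rewrite inE.
  rewrite sr !inE => /and3P[_ -> zA] /=; exact: (subsetP AC).
have E : forall A j1 j2 x y, A \subset C -> #|A| = k.+4 -> j1 \in A -> j2 \in A ->
    x \in A -> y \in A -> x != y -> x != j1 -> x != j2 -> y != j1 -> y != j2 ->
    D A j1 x + D A j1 y = D A j2 x + D A j2 y.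
  move=> A j1 j2 x y AC cA j1A j2A xA yA dxy dx1 dx2 dy1 dy2.
  have [->//|d12] := eqVneq j1 j2.
  have [r [ur sr dr]] := mk_rho cA j1A j2A xA yA d12 dxy dx1 dx2 dy1 dy2.
  rewrite -(evalD A j1 j2 r x y) // -(evalD A j2 j1 r x y) //; last by rewrite sr setD1C.
  - by apply: cswap => //; apply: (subsetP AC).
  - by rewrite eq_sym.
pose p A a0 x := odflt a0 [pick q in A :\ a0 :\ x].
have pP : forall A a0 x, (3 < #|A|)%N -> [&& p A a0 x \in A, p A a0 x != a0 & p A a0 x != x].
  move=> A a0 x cA; rewrite /p; case: pickP => [q|none] /=.
    by rewrite !inE => /and3P[-> -> ->].
  have [q qA /and3P[q1 q2 _]] := exists3 a0 x x cA.
  by move: (none q); rewrite !inE q1 q2 qA.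
pose W A x := if [pick z in A] is Some a0 then
    (if x == a0 then 0 else D A (p A a0 x) a0 + D A (p A a0 x) x) else 0.
exists W; case/tupleP => j t ut tC.
have jt : j \notin t by case/andP: ut.
have ut' : uniq t by case/andP: ut.
set A := [set y in _].
have AC : A \subset C by rewrite sub_set_tuple.
have cA : #|A| = k.+4 by rewrite card_set_tuple.
have jC : j \in C by case/andP: tC.
have jA : j \in A by rewrite inE mem_head.
have tA : forall z, z \in t -> z \in A by move=> z zt; rewrite inE in_cons zt orbT.
have At : [set y in t] = A :\ j.
  apply/setP => z; rewrite !inE; case: (z =P j) => [->|] //=; by rewrite (negbTE jt).
have -> : [tuple of j :: t] = ctup j t by [].
rewrite HWf //; last first.
  apply/allP => z zt; rewrite !inE (allP (andP tC).2) // andbT.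
  by apply: contraNneq jt => <-.
have [u [v duv]] := drop2 (size_tuple t) (k := k.+1).
have /= := drop_uniq k.+1 ut'; rewrite duv /= inE andbT => duv'.
have uA : u \in A by apply: tA; apply: (mem_drop (n0 := k.+1)); rewrite duv mem_head.
have vA : v \in A by apply: tA; apply: (mem_drop (n0 := k.+1)); rewrite duv !inE eqxx orbT.
have uj : u != j by apply: contraNneq jt => <-; apply: (mem_drop (n0 := k.+1)); rewrite duv mem_head.
have vj : v != j by apply: contraNneq jt => <-; apply: (mem_drop (n0 := k.+1)); rewrite duv !inE eqxx orbT.
rewrite At !big_cons !big_nil !addr0.
change (D A j u + D A j v = W A u + W A v).
have c3 : (3 < #|A|)%N by rewrite cA.
rewrite /W; case: pickP => [a0 a0A|/(_ j)]; last by rewrite jA.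
have [ua|ua] := eqVneq u a0.
  subst a0; have vu : (v == u) = false by rewrite eq_sym (negbTE duv').
  rewrite add0r vu.
  have /and3P[pA p1 p2] := pP A u v c3.
  by apply: (E A j (p A u v) u v) => //; rewrite eq_sym.
have [va|va] := eqVneq v a0.
  subst a0; rewrite addr0 [RHS]addrC.
  have /and3P[pA p1 p2] := pP A v u c3.
  by apply: (E A j (p A v u) u v) => //; rewrite eq_sym.
have [q qA /and3P[q1 q2 q3]] := exists3 a0 u v c3.
have /and3P[pA p1 p2] := pP A a0 u c3.
have /and3P[pA' p1' p2'] := pP A a0 v c3.
rewrite (E A (p A a0 u) q a0 u) // 1?eq_sym //.
rewrite (E A (p A a0 v) q a0 v) // 1?eq_sym //.
rewrite (E A j q u v) //; [|by rewrite eq_sym|by rewrite eq_sym].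
by rewrite addrACA F2xx add0r.
Qed.

Lemma cyc3 (x y z : 'F_2) : (y + z) + (x + y) + (z + x) = 0.
Proof.
have -> : (y + z) + (x + y) + (z + x) = (x + x) + (y + y) + (z + z) by ring.
by rewrite !F2xx ?addr0.
Qed.
Lemma sol3 (a b c : 'F_2) : a + b + c = 0 -> a = b + c.
Proof.
move=> h; have -> : a = (a + b + c) - (b + c) by ring.
by rewrite h sub0r (oppr_pchar2 (@pchar_Fp 2 isT)).
Qed.

Lemma cf3 (b : tensor n 3) (x y z : 'I_n) : cf b [tuple x; y; z] = b [tuple e x; e y; e z].
Proof. by rewrite /cf; congr (b _); apply: val_inj. Qed.

Lemma Cons3_char C (b : tensor n 3) : Cons3 C b <-> Char C b.
Proof.
split => [[mb Hc cyc]|[mb [W HW]]]; last first.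
  split => //.
    by move=> j jC; apply/Cons2_char; apply: (@Char_contr 0) => //; split => //; exists W.
  move=> x y z; rewrite -!cf3.
  have p1 : perm_eq [tuple z; x; y] [tuple x; y; z] by rewrite (perm_rot 2 [:: x; y; z]).
  have p2 : perm_eq [tuple y; z; x] [tuple x; y; z] by rewrite (perm_rot 1 [:: x; y; z]).
  have [fb sb] : fixd b /\ supp C b by apply/Multi_char.
  case H: (uniq [tuple x; y; z] && all (fun w => w \in C) [tuple x; y; z]).
    move/andP: H => [u a].
    rewrite !HW ?(perm_uniq p1) ?(perm_uniq p2) ?(perm_all _ p1) ?(perm_all _ p2) //.
    have s1 : [set w in [tuple z; x; y]] = [set w in [tuple x; y; z]].
      by apply/setP => w; rewrite !inE; case: (w == x); case: (w == y); case: (w == z).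
    have s2 : [set w in [tuple y; z; x]] = [set w in [tuple x; y; z]].
      by apply/setP => w; rewrite !inE; case: (w == x); case: (w == y); case: (w == z).
    rewrite s1 s2 /= !big_cons !big_nil !addr0; exact: cyc3.
  rewrite !(supp0 sb) ?H // ?(perm_uniq p1) ?(perm_uniq p2) ?(perm_all _ p1) ?(perm_all _ p2) ?H //.
  by rewrite !addr0.
have [fb sb] : fixd b /\ supp C b by apply/Multi_char.
split => //.
have : forall j, exists W : {set 'I_n} -> 'I_n -> 'F_2, j \in C ->
    forall t : 2.-tuple 'I_n, uniq t -> all (fun x => x \in C :\ j) t ->
    cf b (ctup j t) = \sum_(x <- drop 0 t) W [set y in t] x.
  move=> j; case jC: (j \in C); last by exists (fun _ _ => 0).
  have [_ [W HW]] := (Cons2_char _ _).1 (Hc j jC); exists W => _ t ut tC; rewrite -cf_contr; exact: HW.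
case/fin_all_exists => Wf HWf.
pose D A j x := Wf j (A :\ j) x.
exists (fun A x => \sum_(y in A :\ x) D A x y).
case/tupleP => j t; case/tupleP: t => u t; case/tupleP: t => v t; rewrite tuple0.
have -> : [tuple of j :: [tuple of u :: [tuple of v :: [tuple]]]] = [tuple j; u; v] by apply: val_inj.
set A := [set y in _] => ut tC.
move: (ut) (tC) => /=; rewrite !inE !andbT negb_or => /andP[/andP[ju jv] uv] /and3P[jC uC vC].
have key : forall a c d, [set y in [tuple a; c; d]] = A -> a != c -> a != d -> c != d ->
    a \in C -> c \in C -> d \in C -> cf b [tuple a; c; d] = D A a c + D A a d.
  move=> a c d sA ac ad cd aC cC dC.
  have -> : [tuple a; c; d] = ctup a [tuple c; d] by apply: val_inj.
  rewrite HWf //; last first.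
    by rewrite /= !inE cC dC ![_ == a]eq_sym ac ad.
    by rewrite /= inE cd.
  rewrite /= big_cons big_seq1.
  have -> // : [set y in [tuple c; d]] = A :\ a.
  apply/setP => w; rewrite -sA !inE; case: (w =P a) => [->|_] /=.
    by rewrite (negbTE ac) (negbTE ad).
  by [].
have sumD : forall a c d, A :\ a = [set c; d] -> c != d -> \sum_(y in A :\ a) D A a y = D A a c + D A a d.
  move=> a c d -> cd; rewrite big_setU1 ?big_set1 //; by rewrite inE.
have h1 := key j u v erefl ju jv uv jC uC vC.
rewrite /= big_cons big_seq1 h1.
have sA : forall a c d : 'I_n, [set y in [tuple a; c; d]] = [set y in [tuple c; a; d]] /\
   [set y in [tuple a; c; d]] = [set y in [tuple d; a; c]] /\
   [set y in [tuple a; c; d]] = [set y in [tuple c; d; a]].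
  by move=> a c d; split; [|split]; apply/setP => w; rewrite !inE;
    case: (w == a); case: (w == c); case: (w == d).
have [s1 [s2 s3]] := sA j u v.
have vu : v != u by rewrite eq_sym.
have uj : u != j by rewrite eq_sym.
have vj : v != j by rewrite eq_sym.
have k1 := key u j v (esym s1) uj uv jv uC jC vC.
have k2 := key v j u (esym s2) vj vu ju vC jC uC.
have k3 := key u v j (esym s3) uv uj vj uC vC jC.
have Au : A :\ u = [set j; v].
  apply/setP => w; rewrite !inE; case: (w =P u) => [->|_] //=.
  by rewrite (negbTE uj) (negbTE uv).
have Av : A :\ v = [set j; u].
  apply/setP => w; rewrite !inE; case: (w =P v) => [->|_] /=.
    by rewrite (negbTE vj) (negbTE vu).
  by rewrite orbF.
rewrite (sumD u j v Au jv) (sumD v j u Av ju) -k1 -k2 -h1.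
have := cyc j u v; rewrite -!cf3 => /sol3 ->.
by rewrite k3 k1 addrC [D A u j + _]addrC.
Qed.

Lemma step k (P : {set 'I_n} -> tensor n k.+3 -> Prop) (HP : forall C b, P C b <-> Char C b)
  C (b : tensor n k.+4) :
  [/\ b \in Multi C k.+4, (forall j, j \in C -> P (C :\ j) (contr b (e j))) &
      forall j1 j2 : 'I_n, j1 \in C -> j2 \in C -> j1 != j2 ->
        contr (contr b (e j1)) (e j2) = contr (contr b (e j2)) (e j1)] <-> Char C b.
Proof.
split => [[mb Hc Hs]|Ch].
  split => //; apply: step_fwd => // j jC; exact/HP/Hc.
split; first by case: Ch.
  by move=> j jC; apply/HP; apply: Char_contr.
by move=> j1 j2 _ _ _; apply: Char_swap Ch.
Qed.

Lemma Cons4_char k C (b : tensor n k.+4) : @Cons4 n k C b <-> Char C b.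
Proof.
elim: k C b => [|k IH] C b /=.
  exact: (step Cons3_char).
exact: (step IH).
Qed.
End S.

Theorem proposition2p4 (n : nat) (i : nat) (B : {set 'I_n}) :
  (1 <= n)%N -> (1 <= i)%N ->
  forall b : tensor n i, @Consistent n B i b <-> b \in @Gov n B i.
Proof.
move=> _ hi b; apply: (iff_trans _ (iff_sym (Gov_char B b))).
case: i hi b => [|[|[|[|k]]]] // _ b /=.
- exact: Cons1_char.
- exact: Cons2_char.
- exact: Cons3_char.
- exact: Cons4_char.
Qed.
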